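(* Let $f_{X,Z}$ be a Gaussian latent machine, i.e. $f_{X,Z}(x,z)\propto\prod_{i=1}^m\mathcal{N}\big((Kx)_i;\mu_i(z_i),\sigma_i^2(z_i)\big)\,f_i(z_i)$ with $K\in\mathbb{R}^{m\times n}$, $m\ge n$, of full column rank. Then the marginal density $f_X$ of $X$ is a Gaussian mixture on $\mathbb{R}^n$ of the form $f_X(x)=\int_{\mathcal{Z}}f_Z(z)\cdot\mathcal{N}\big(x;\mu(z),\Sigma(z)\big)\,\mathrm{d}z$, where $f_Z$ is the marginal density of $Z$, $\Sigma(z):=\big(K^\top\Sigma_0^{-1}(z)K\big)^{-1}$ and $\mu(z):=\Sigma(z)K^\top\Sigma_0^{-1}(z)\mu_0(z)$.
   Context: A Gaussian latent machine: $X\in\mathbb{R}^n$, $Z=(Z_1,\dots,Z_m)\in\mathcal{Z}=\mathcal{Z}_1\times\cdots\times\mathcal{Z}_m$, $f_i$ univariate densities on $\mathcal{Z}_i$, $\mu_i:\mathcal{Z}_i\to\mathbb{R}$, $\sigma_i^2:\mathcal{Z}_i\to(0,\infty)$, and $\mathcal{N}(\cdot;\mu,\Sigma)$ the (multivariate) normal density. $\mu_0(z):=(\mu_1(z_1),\dots,\mu_m(z_m))$, $\Sigma_0(z):=\operatorname{diag}(\sigma_1^2(z_1),\dots,\sigma_m^2(z_m))$. *)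

(* Defs.v *)
From HB Require Import structures.
From mathcomp Require Import all_boot all_order all_algebra.
From mathcomp Require Import all_classical all_reals all_analysis.
Set Implicit Arguments. Unset Strict Implicit. Unset Printing Implicit Defensive.
Import Order.TTheory GRing.Theory Num.Theory.
Local Open Scope classical_set_scope.
Local Open Scope ring_scope.

Section GLM.
Variable R : realType.

(* The first coordinate is the
   outermost integration variable. *)
Fixpoint iint (n : nat) : ('I_n -> set R) -> ('cV[R]_n -> \bar R) -> \bar R :=
  match n with
  | 0 => fun _ g => g 0
  | k.+1 => fun A g =>
      (\int[@lebesgue_measure R]_(t in A ord0)
         iint (fun i : 'I_k => A (lift ord0 i))
              (fun v : 'cV[R]_k => g (col_mx (t%:M : 'M[R]_1) v)))%E
  end.

Definition gauss_pdf (n : nat) (mu : 'cV[R]_n) (S : 'M[R]_n) (x : 'cV[R]_n) : R :=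
  (Num.sqrt ((pi *+ 2) ^+ n * \det S))^-1 *
  expR (- (((x - mu)^T *m invmx S *m (x - mu)) 0 0) / 2).

(* Univariate normal density N(y; mu, s2) with variance s2 (library normal_pdf
   is parameterised by the standard deviation). *)
Definition gauss1_pdf (mu s2 y : R) : R := normal_pdf mu (Num.sqrt s2) y.

Variables (m n : nat).

Definition mu0 (mu : 'I_m -> R -> R) (z : 'cV[R]_m) : 'cV[R]_m :=
  \col_i mu i (z i 0).
Definition Sigma0 (s2 : 'I_m -> R -> R) (z : 'cV[R]_m) : 'M[R]_m :=
  diag_mx (\row_i s2 i (z i 0)).

Definition glm_cov (K : 'M[R]_(m, n)) s2 z : 'M[R]_n :=
  invmx (K^T *m invmx (Sigma0 s2 z) *m K).
Definition glm_mean (K : 'M[R]_(m, n)) mu s2 z : 'cV[R]_n :=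
  glm_cov K s2 z *m K^T *m invmx (Sigma0 s2 z) *m mu0 mu z.

Definition glm_weight (K : 'M[R]_(m, n)) (mu s2 f : 'I_m -> R -> R)
    (x : 'cV[R]_n) (z : 'cV[R]_m) : R :=
  \prod_(i < m) (gauss1_pdf (mu i (z i 0)) (s2 i (z i 0)) ((K *m x) i 0) * f i (z i 0)).

Definition glm_mass K (Zs : 'I_m -> set R) mu s2 f : \bar R :=
  iint (fun _ => [set: R]) (fun x => iint Zs (fun z => (glm_weight K mu s2 f x z)%:E)).

Definition glm_joint K Zs mu s2 f x z : \bar R :=
  (glm_weight K mu s2 f x z / fine (glm_mass K Zs mu s2 f))%:E.
Definition glm_marginal_X K Zs mu s2 f (x : 'cV[R]_n) : \bar R :=
  iint Zs (fun z => glm_joint K Zs mu s2 f x z).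
Definition glm_marginal_Z K Zs mu s2 f (z : 'cV[R]_m) : \bar R :=
  iint (fun _ => [set: R]) (fun x => glm_joint K Zs mu s2 f x z).

End GLM.

(* Main.v *)
Require Import Defs.
From HB Require Import structures.
From mathcomp Require Import all_boot all_order all_algebra.
From mathcomp Require Import all_classical all_reals all_analysis.
From mathcomp Require Import ring lra measurable_realfun.
Import Order.TTheory GRing.Theory Num.Theory.
Local Open Scope classical_set_scope.
Local Open Scope ring_scope.

Definition bil {R : realType} {n : nat} (A : 'M[R]_n) (x y : 'cV[R]_n) : R :=
  (x^T *m A *m y) 0 0.
Definition quad {R : realType} {n : nat} (A : 'M[R]_n) (x : 'cV[R]_n) : R :=
  bil A x x.

Section Q.
Variable R : realType.
Variable n : nat.
Implicit Types (A : 'M[R]_n) (x y : 'cV[R]_n).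

Lemma bil_sym A x y : A^T = A -> bil A x y = bil A y x.
Proof.
move=> sA; rewrite /bil.
have e : forall M : 'M[R]_1, M 0 0 = M^T 0 0 by move=> M; rewrite mxE.
rewrite [LHS]e.
by rewrite !trmx_mul trmxK sA mulmxA.
Qed.

Lemma bilDl A x y z : bil A (x + y) z = bil A x z + bil A y z.
Proof. by rewrite /bil linearD /= !mulmxDl mxE. Qed.
Lemma bilDr A x y z : bil A z (x + y) = bil A z x + bil A z y.
Proof. by rewrite /bil !mulmxDr mxE. Qed.
Lemma bilZl A a x z : bil A (a *: x) z = a * bil A x z.
Proof. by rewrite /bil linearZ /= -!scalemxAl mxE. Qed.
Lemma bilZr A a x z : bil A z (a *: x) = a * bil A z x.
Proof. by rewrite /bil -!scalemxAr mxE. Qed.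
Lemma bilNl A x z : bil A (- x) z = - bil A x z.
Proof. by rewrite -scaleN1r bilZl mulN1r. Qed.
Lemma bilNr A x z : bil A z (- x) = - bil A z x.
Proof. by rewrite -scaleN1r bilZr mulN1r. Qed.

Lemma quadD A x y : A^T = A -> quad A (x + y) = quad A x + (bil A x y) *+ 2 + quad A y.
Proof.
move=> sA; rewrite /quad bilDl !bilDr (bil_sym _ y x sA); rewrite mulr2n; lra.
Qed.
Lemma quadZ A a x : quad A (a *: x) = a ^+ 2 * quad A x.
Proof. by rewrite /quad bilZl bilZr mulrA expr2. Qed.
Lemma quadN A x : quad A (- x) = quad A x.
Proof. by rewrite /quad bilNl bilNr opprK. Qed.
End Q.

Lemma gauss1 (R : realType) (s a C : R) : 0 < s -> 0 <= C ->
  (\int[@lebesgue_measure R]_(t in [set: R]) (C * expR (- (s * (t - a) ^+ 2) / 2))%:E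
   = (C * Num.sqrt (pi *+ 2 / s))%:E)%E.
Proof.
move=> s0 C0.
set sg := (Num.sqrt s)^-1.
have sq0 : 0 < Num.sqrt s by rewrite sqrtr_gt0.
have sg0 : sg != 0 by rewrite invr_eq0 gt_eqF.
have k0 : 0 <= C * Num.sqrt (pi *+ 2 / s) by rewrite mulr_ge0 ?sqrtr_ge0.
transitivity (\int[@lebesgue_measure R]_(t in [set: R])
   ((C * Num.sqrt (pi *+ 2 / s))%:E * (normal_pdf a sg t)%:E))%E.
  apply: eq_integral => t _; rewrite -EFinM; congr EFin.
  rewrite normal_pdfE //= /normal_peak /normal_fun.
  have e1 : sg ^+ 2 = s^-1 by rewrite /sg exprVn sqr_sqrtr // ltW.
  rewrite e1.
  have -> : s^-1 * pi *+ 2 = pi *+ 2 / s by rewrite mulrnAl mulrC -mulrnAl.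
  have hp : 0 < Num.sqrt (pi *+ 2 / s).
    by rewrite sqrtr_gt0 divr_gt0 // mulrn_wgt0 // pi_gt0.
  rewrite mulrA.
  rewrite -[RHS]mulrA; congr (C * _); rewrite mulrA divff ?gt_eqF // mul1r.
  congr expR.
  field. by rewrite gt_eqF.
rewrite ge0_integralZl_EFin //=.
- by rewrite integral_normal_pdf mule1.
- by move=> x _; rewrite lee_fin normal_pdf_ge0.
- by apply/measurable_EFinP; exact: measurable_normal_pdf.
Qed.

Lemma m11T (R : realType) (M : 'M[R]_1) : M^T 0 0 = M 0 0.
Proof. by rewrite mxE. Qed.

Definition pd {R : realType} {n : nat} (M : 'M[R]_n) :=
  forall x : 'cV[R]_n, x != 0 -> 0 < quad M x.

Lemma pd_unit (R : realType) (n : nat) (M : 'M[R]_n) : pd M -> M \in unitmx.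
Proof.
move=> pM; rewrite unitmxE unitfE; apply/negP => /det0P [v v0 vM].
have := pM (v^T); rewrite trmx_eq0 => /(_ v0).
by rewrite /quad /bil trmxK vM mul0mx mxE ltxx.
Qed.

Lemma quad0 (R : realType) (n : nat) (M : 'M[R]_n) : quad M 0 = 0.
Proof. by rewrite /quad /bil mulmx0 mxE. Qed.

Section Block.
Variable R : realType.
Variable n : nat.
Variable P : 'M[R]_(1 + n).
Hypothesis sP : P^T = P.
Let A := ulsubmx P.
Let C := dlsubmx P.
Let D := drsubmx P.

Lemma ursubE : ursubmx P = C^T.
Proof. by rewrite /C -{1}sP -trmx_dlsub. Qed.
Lemma symD : D^T = D.
Proof. by rewrite /D trmx_drsub sP. Qed.

Lemma quad_block (a : R) (y : 'cV[R]_n) :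
  quad P (col_mx a%:M y) = a ^+ 2 * A 0 0 + (a * (y^T *m C) 0 0) *+ 2 + quad D y.
Proof.
rewrite /quad /bil tr_col_mx tr_scalar_mx -[in LHS](submxK P) ursubE.
rewrite mul_row_block mul_row_col !mulmxDl.
have eD : forall M N : 'M[R]_1, (M + N) 0 0 = M 0 0 + N 0 0 by move=> M N; rewrite mxE.
have eZ : forall (b : R) (M : 'M[R]_1), (b *: M) 0 0 = b * M 0 0 by move=> b M; rewrite mxE.
rewrite !mul_scalar_mx !mul_mx_scalar -!scalemxAl !eD !eZ.
have -> : (C^T *m y) 0 0 = (y^T *m C) 0 0 by rewrite -m11T trmx_mul trmxK.
rewrite -/A -/D -/C; ring.
Qed.
Hypothesis pdP : pd P.

Lemma pdD : pd D.
Proof.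
move=> y y0; have := pdP (col_mx 0%:M y).
rewrite quad_block expr0n /= !mul0r mul0rn !add0r; apply.
by rewrite col_mx_eq0 negb_and y0 orbT.
Qed.

Lemma unitD : D \in unitmx.
Proof. exact: pd_unit pdD. Qed.

Definition bu := invmx D *m C.
Definition bs := A 0 0 - (C^T *m bu) 0 0.

Lemma quad_complete (a : R) y :
  quad P (col_mx a%:M y) = a ^+ 2 * bs + quad D (y + a *: bu).
Proof.
rewrite quad_block quadD ?symD // quadZ bilZr.
have -> : bil D y bu = (y^T *m C) 0 0.
  by rewrite /bil /bu -mulmxA (mulmxA D) mulmxV ?unitD // mul1mx.
have -> : quad D bu = (C^T *m bu) 0 0.
  rewrite /quad /bil /bu trmx_mul trmx_inv symD -!mulmxA (mulmxA D) mulmxV ?unitD //.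
  by rewrite mul1mx.
rewrite /bs; ring.
Qed.

Lemma bs_gt0 : 0 < bs.
Proof.
have := pdP (col_mx 1%:M (- bu)).
rewrite quad_complete scale1r addNr quad0 expr1n mul1r addr0; apply.
by rewrite col_mx_eq0 negb_and matrix_nonzero1.
Qed.

Lemma det_block : \det P = bs * \det D.
Proof.
have e : block_mx 1%:M (- bu^T) 0 1%:M *m P = block_mx (@scalar_mx R 1 bs) 0 C D.
  rewrite -{1}[P]submxK mulmx_block !mul1mx !mul0mx !add0r ursubE -/A -/C -/D !mulNmx.
  have -> : bu^T *m D = C^T.
    by rewrite /bu trmx_mul trmx_inv symD -mulmxA mulVmx ?unitD // mulmx1.
  rewrite addrN; congr block_mx.
  apply/matrixP => i j; rewrite !ord1 /bs !mxE eqxx mulr1n.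
  by congr (_ - _); apply: eq_bigr => k _; rewrite !mxE mulrC.
have := congr1 determinant e.
rewrite det_mulmx det_ublock !det1 !mul1r det_lblock det_mx11 mxE eqxx mulr1n.
by [].
Qed.
End Block.



Lemma pd_det_gt0 (R : realType) (n : nat) (M : 'M[R]_n) : M^T = M -> pd M -> 0 < \det M.
Proof.
elim: n M => [|n IH] M sM pM; first by rewrite det_mx00.
rewrite (det_block _ _ _ sM pM) mulr_gt0 ?(bs_gt0 _ _ _ sM pM) //.
apply: IH; [exact: symD | exact: pdD _ _ _ sM pM].
Qed.

Lemma gaussN (R : realType) (n : nat) : forall (P : 'M[R]_n) (mu : 'cV[R]_n) (c : R),
  P^T = P -> pd P -> 0 <= c ->
  iint (fun _ => [set: R]) (fun x => (c * expR (- quad P (x - mu) / 2))%:E) =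
  (c * Num.sqrt ((pi *+ 2) ^+ n / \det P))%:E.
Proof.
elim: n => [|n IH] P mu c sP pP c0.
  rewrite /= (flatmx0 (0 - mu)) quad0 oppr0 mul0r expR0 det_mx00 expr0 divr1 sqrtr1.
  by rewrite !mulr1.
rewrite /=.
set a := usubmx (mu : 'cV_(1 + n)) 0 0; set mu' := dsubmx (mu : 'cV_(1 + n)).
set D := drsubmx (P : 'M[R]_(1 + n)); set b := bs _ _ P; set u := bu _ _ P.
have sD : D^T = D by exact: symD.
have pD : pd D by exact: pdD.
have b0 : 0 < b by exact: bs_gt0.
have dD : 0 < \det D by exact: pd_det_gt0.
have key : forall (t : R) (v : 'cV[R]_n), quad P (col_mx t%:M v - mu) =
    (t - a) ^+ 2 * b + quad D (v - (mu' - (t - a) *: u)).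
  have em : mu = col_mx a%:M mu' by rewrite /a /mu' -mx11_scalar vsubmxK.
  move=> t v.
  have -> : col_mx t%:M v - mu = col_mx (t - a)%:M (v - mu') :> 'cV_(1 + n).
    by rewrite em (opp_col_mx a%:M mu') (add_col_mx (t%:M) v) raddfB.
  rewrite quad_complete //; congr (_ + quad _ _).
  by rewrite opprB addrA addrAC.
transitivity (\int[@lebesgue_measure R]_(t in [set: R])
   ((c * Num.sqrt ((pi *+ 2) ^+ n / \det D)) * expR (- (b * (t - a) ^+ 2) / 2))%:E)%E.
  apply: eq_integral => t _.
  have -> : (fun v : 'cV_n => (c * expR (- quad P (col_mx t%:M v - mu) / 2))%:E) =
     (fun v => ((c * expR (- (b * (t - a) ^+ 2) / 2)) *
                expR (- quad D (v - (mu' - (t - a) *: u)) / 2))%:E).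
    apply/funext => v; rewrite key -mulrA -expRD; congr (_ * expR _)%:E.
    by rewrite mulrC; field.
  rewrite IH // ?mulr_ge0 ?expR_ge0 //; congr EFin; ring.
rewrite gauss1 // ?mulr_ge0 ?sqrtr_ge0 //; congr EFin.
have h0 : 0 <= (pi *+ 2) ^+ n / \det D.
  apply: divr_ge0; [apply: exprn_ge0; apply: mulrn_wge0; exact: pi_ge0 | exact: ltW].
rewrite -mulrA -(sqrtrM _ h0).
rewrite (det_block _ _ _ sP pP) -/b -/D exprS; congr (c * Num.sqrt _).
field; by rewrite !gt_eqF.
Qed.

Section W.
Variables (R : realType) (m n : nat) (K : 'M[R]_(m, n)) (mu s2 f : 'I_m -> R -> R).
Variable z : 'cV[R]_m.
Hypothesis s2pos : forall i, 0 < s2 i (z i 0).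
Hypothesis fpos : forall i, 0 <= f i (z i 0).
Hypothesis rK : \rank K = n.

Let d := \row_i (s2 i (z i 0))^-1.

Lemma E_diag : invmx (Sigma0 s2 z) = diag_mx d.
Proof.
have h : Sigma0 s2 z *m diag_mx d = 1%:M.
  rewrite /Sigma0 mulmx_diag; apply/matrixP => i j; rewrite !mxE.
  by rewrite divff ?(gt_eqF (s2pos i)).
have [u _] := mulmx1_unit h.
by rewrite -[RHS]mul1mx -(mulVmx u) -mulmxA h mulmx1.
Qed.

Lemma quadE (y : 'cV[R]_m) : quad (invmx (Sigma0 s2 z)) y = \sum_i (y i 0) ^+ 2 / s2 i (z i 0).
Proof.
rewrite E_diag /quad /bil mul_mx_diag mxE; apply: eq_bigr => i _.
by rewrite !mxE expr2; field; rewrite gt_eqF.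
Qed.

Let E := invmx (Sigma0 s2 z).
Let P := K^T *m E *m K.

Lemma symE : E^T = E.
Proof. by rewrite /E E_diag tr_diag_mx. Qed.

Lemma symP : P^T = P.
Proof. by rewrite /P !trmx_mul trmxK symE mulmxA. Qed.

Lemma quadP x : quad P x = quad E (K *m x).
Proof. by rewrite /quad /bil /P trmx_mul !mulmxA. Qed.

Lemma pdP : pd P.
Proof.
move=> x x0; rewrite quadP.
have Kx0 : K *m x != 0.
  apply: contra x0 => /eqP h.
  have rf : row_free K^T by rewrite /row_free mxrank_tr rK.
  by rewrite -trmx_eq0 -(mulmx_free_eq0 _ rf) -trmx_mul h trmx0.
rewrite /E quadE lt_def; apply/andP; split; last first.
  by apply: sumr_ge0 => i _; rewrite divr_ge0 ?sqr_ge0 // ltW.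
apply: contra Kx0 => /eqP h0; apply/eqP/matrixP => i j; rewrite ord1 [RHS]mxE.
have := psumr_eq0P (fun i _ => divr_ge0 (sqr_ge0 ((K *m x) i 0)) (ltW (s2pos i))) h0 (isT : true).
move=> /(_ i) /eqP; rewrite mulf_eq0 invr_eq0 (gt_eqF (s2pos i)) orbF sqrf_eq0.
by move/eqP.
Qed.
Let mean := glm_mean K mu s2 z.

Lemma unitP : P \in unitmx.
Proof. exact: pd_unit pdP. Qed.

Lemma bil_mean x : bil P x mean = bil E (K *m x) (mu0 mu z).
Proof.
rewrite /bil /mean /glm_mean /glm_cov -/E -/P trmx_mul.
have -> : invmx P *m K^T *m E *m mu0 mu z = invmx P *m (K^T *m E *m mu0 mu z).
  by rewrite !mulmxA.
by rewrite -(mulmxA x^T P) mulKVmx ?unitP // !mulmxA.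
Qed.

Lemma weight_form : exists W, 0 <= W /\ forall x,
  glm_weight K mu s2 f x z = W * expR (- quad P (x - mean) / 2).
Proof.
set W0 := \prod_i (normal_peak (Num.sqrt (s2 i (z i 0))) * f i (z i 0)).
exists (W0 * expR (- (quad E (mu0 mu z) - quad P mean) / 2)); split.
  apply: mulr_ge0; last exact: expR_ge0.
  by apply: prodr_ge0 => i _; rewrite mulr_ge0 ?normal_peak_ge0.
move=> x.
have h1 : glm_weight K mu s2 f x z = W0 * expR (- quad E (K *m x - mu0 mu z) / 2).
  rewrite /glm_weight /W0 (eq_bigr (fun i => (normal_peak (Num.sqrt (s2 i (z i 0))) * f i (z i 0)) *
     expR (- ((K *m x) i 0 - mu i (z i 0)) ^+ 2 / (s2 i (z i 0) *+ 2)))); last first.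
    move=> i _; rewrite /gauss1_pdf normal_pdfE ?sqrtr_eq0 -?ltNge ?s2pos //=.
    rewrite /normal_fun sqr_sqrtr ?(ltW (s2pos i)) //; ring.
  rewrite big_split /= -expR_sum; congr (_ * expR _).
  rewrite /E quadE mulNr mulr_suml -sumrN; apply: eq_bigr => i _.
  have eB : forall (A B : 'cV[R]_m), (A - B) i 0 = A i 0 - B i 0 by move=> A B; rewrite !mxE.
  have e0 : (mu0 mu z) i 0 = mu i (z i 0) by rewrite mxE.
  rewrite eB e0; field; by rewrite gt_eqF.
have h2 : quad E (K *m x - mu0 mu z) = quad P (x - mean) + (quad E (mu0 mu z) - quad P mean).
  rewrite !quadD ?symE ?symP // !quadN !bilNr -quadP bil_mean; ring.
rewrite h1 h2 -mulrA -expRD; congr (_ * expR _); field; by [].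
Qed.
End W.


Lemma iint_ext (R : realType) (n : nat) : forall (A : 'I_n -> set R) (g1 g2 : 'cV[R]_n -> \bar R),
  (forall v : 'cV[R]_n, (forall i, A i (v i 0)) -> g1 v = g2 v) -> iint A g1 = iint A g2.
Proof.
elim: n => [|n IH] A g1 g2 H.
  by rewrite /=; apply: H => -[].
rewrite /=; apply: eq_integral => t; rewrite inE => At.
apply: IH => v Hv; apply: H => i.
case: (unliftP ord0 i) => [j ->|->].
  have -> : lift ord0 j = rshift 1 j :> 'I_(1 + n) by apply: val_inj.
  rewrite (col_mxEd (t%:M) v j 0).
  have -> : rshift 1 j = lift ord0 j :> 'I_(1 + n) by apply: val_inj.
  exact: Hv.
have -> : ord0 = lshift n 0 :> 'I_(1 + n) by apply: val_inj.
rewrite (col_mxEu (t%:M) v 0 0) mxE eqxx mulr1n.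
have -> : lshift n 0 = ord0 :> 'I_(1 + n) by apply: val_inj.
exact: At.
Qed.

Theorem corollary3p12 (R : realType) (m n : nat) (K : 'M[R]_(m, n))
    (Zs : 'I_m -> set R) (f mu s2 : 'I_m -> R -> R) :
  (n <= m)%N ->
  \rank K = n ->
  (forall i, measurable (Zs i)) ->
  (forall i, measurable_fun (Zs i) (f i)) ->
  (forall i t, Zs i t -> 0 <= f i t) ->
  (forall i, (\int[@lebesgue_measure R]_(t in Zs i) (f i t)%:E = 1)%E) ->
  (forall i, measurable_fun (Zs i) (mu i)) ->
  (forall i, measurable_fun (Zs i) (s2 i)) ->
  (forall i t, Zs i t -> 0 < s2 i t) ->
  (0 < glm_mass K Zs mu s2 f < +oo)%E ->
  forall x : 'cV[R]_n,
    glm_marginal_X K Zs mu s2 f x =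
    iint Zs (fun z => (glm_marginal_Z K Zs mu s2 f z *
                       (gauss_pdf (glm_mean K mu s2 z) (glm_cov K s2 z) x)%:E)%E).
Proof.
move=> _ rK _ _ fge0 _ _ _ s2gt0 hM x.
set M := fine (glm_mass K Zs mu s2 f).
have M0 : 0 < M by exact: fine_gt0.
rewrite /glm_marginal_X; apply: iint_ext => z Hz.
have s2p : forall i, 0 < s2 i (z i 0) := fun i => s2gt0 i _ (Hz i).
have fp : forall i, 0 <= f i (z i 0) := fun i => fge0 i _ (Hz i).
have [W [W0 HW]] := weight_form _ _ _ K mu s2 f z s2p fp rK.
have sP := symP _ _ _ K s2 z s2p.
have pP := pdP _ _ _ K s2 z s2p rK.
set P := K^T *m invmx (Sigma0 s2 z) *m K in HW sP pP.
set mean := glm_mean K mu s2 z in HW.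
rewrite /glm_marginal_Z /glm_joint -/M.
have -> : (fun x' => ((glm_weight K mu s2 f x' z) / M)%:E) =
    (fun x' => ((W / M) * expR (- quad P (x' - mean) / 2))%:E).
  by apply/funext => x'; rewrite HW mulrAC.
rewrite gaussN // ?divr_ge0 ?(ltW M0) //.
rewrite HW -EFinM; congr EFin.
rewrite /gauss_pdf /glm_cov -/P invmxK det_inv.
have dP : 0 < \det P by exact: pd_det_gt0.
set q := Num.sqrt _.
have q0 : q != 0.
  by rewrite /q gt_eqF // sqrtr_gt0 mulr_gt0 ?invr_gt0 // exprn_gt0 // mulrn_wgt0 // pi_gt0.
rewrite /quad /bil; field; by rewrite q0 gt_eqF.
Qed.
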